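(* Let $H$ be a Hopf algebra over a field $k$. For all $x,y\in H$, the elements $p_x=t_{x_1}t_{S(x_2)}$ and $q_{x,y}=t_{x_1}t_{y_1}t_{S(x_2y_2)}$ of $S(t_H)$, identified with $p_x\otimes1$ and $q_{x,y}\otimes1$ in $S(t_H)\otimes H$, belong to $\bar\mu(\mathcal{V}_H)$.
   Context: Sweedler notation $\Delta(x)=x_1\otimes x_2$; $S$ is the antipode of $H$. Let $t_H=\{t_x:x\in H\}$ be a copy of the vector space $H$ ($x\mapsto t_x$ linear) and $S(t_H)$ its symmetric algebra. Let $X_H=\{X_x:x\in H\}$ be another copy of $H$ and $T(X_H)$ the tensor algebra, a right $H$-comodule algebra via $\delta_T(X_x)=X_{x_1}\otimes x_2$. Give $S(t_H)\otimes H$ the right $H$-comodule algebra structure $\mathrm{id}\otimes\Delta$. Let $\mu:T(X_H)\to S(t_H)\otimes H$ be the algebra map with $\mu(X_x)=t_{x_1}\otimes x_2$ (an $H$-comodule algebra map), $I_H=\ker\mu$, $\mathcal{U}_H=T(X_H)/I_H$ (the universal $H$-comodule algebra), $\bar\mu:\mathcal{U}_H\hookrightarrow S(t_H)\otimes H$ the induced injection, and $\mathcal{V}_H=\{u\in\mathcal{U}_H:\delta(u)=u\otimes1\}$ its subalgebra of right $H$-coinvariants. *)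

(* Defs.v *)
From HB Require Import structures.
From mathcomp Require Import all_boot all_order all_algebra.
From mathcomp Require Import finmap.
From mathcomp.multinomials Require Import monalg.

Set Implicit Arguments.
Unset Strict Implicit.
Unset Printing Implicit Defensive.

Import GRing.Theory.
Local Open Scope ring_scope.

(* A vector space with basis J over k is modelled as the
   free k-module {malg k[J]} (finitely supported functions J -> k).
   The tensor product of free modules with bases J and L is the free module
   with basis J * L.  A Hopf algebra H over k is given by a basis I of its
   underlying vector space (H := {malg k[I]}) and the values of its structure
   maps on basis vectors, subject to the Hopf algebra axioms. *)

Section FreeModules.
Context {k : fieldType}.

Definition bv {J : choiceType} (j : J) : {malg k[J]} := << (1 : k) *g j >>.

Definition ext {J : choiceType} {W : lmodType k} (f : J -> W)
  (v : {malg k[J]}) : W := \sum_(j <- msupp v) v@_j *: f j.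

Definition tens {J L : choiceType} (a : {malg k[J]}) (b : {malg k[L]})
  : {malg k[(J * L)%type]} := ext (fun j => ext (fun l => bv (j, l)) b) a.

Definition tmap {J L J' L' : choiceType}
  (f : {malg k[J]} -> {malg k[J']}) (g : {malg k[L]} -> {malg k[L']})
  (w : {malg k[(J * L)%type]}) : {malg k[(J' * L')%type]} :=
  ext (fun p => tens (f (bv p.1)) (g (bv p.2))) w.

Definition relabel {J L : choiceType} (h : J -> L) (v : {malg k[J]})
  : {malg k[L]} := ext (fun j => bv (h j)) v.

End FreeModules.

Record HopfData (k : fieldType) (I : choiceType) := {
  hm : I -> I -> {malg k[I]};
  h1 : {malg k[I]};
  hD : I -> {malg k[(I * I)%type]};
  he : I -> k;
  hS : I -> {malg k[I]}
}.

Section Hopf.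
Variables (k : fieldType) (I : choiceType) (A : HopfData k I).

Definition mulH (x y : {malg k[I]}) : {malg k[I]} :=
  ext (fun i => ext (fun j => hm A i j) y) x.
Definition comul (x : {malg k[I]}) : {malg k[(I * I)%type]} := ext (hD A) x.
Definition counit (x : {malg k[I]}) : k := \sum_(i <- msupp x) x@_i * he A i.
Definition antip (x : {malg k[I]}) : {malg k[I]} := ext (hS A) x.

Definition mulHH (u v : {malg k[(I * I)%type]}) : {malg k[(I * I)%type]} :=
  ext (fun p => ext (fun q =>
     tens (mulH (bv p.1) (bv q.1)) (mulH (bv p.2) (bv q.2))) v) u.
Definition multH (w : {malg k[(I * I)%type]}) : {malg k[I]} :=
  ext (fun p => mulH (bv p.1) (bv p.2)) w.
Definition counit_l (w : {malg k[(I * I)%type]}) : {malg k[I]} :=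
  ext (fun p => he A p.1 *: bv p.2) w.
Definition counit_r (w : {malg k[(I * I)%type]}) : {malg k[I]} :=
  ext (fun p => he A p.2 *: bv p.1) w.
Definition assoc3 (p : (I * I) * I) : I * (I * I) := (p.1.1, (p.1.2, p.2)).

Definition is_hopf : Prop :=
  (
      (forall x y z, mulH (mulH x y) z = mulH x (mulH y z)) /\
      (forall x, mulH (h1 A) x = x /\ mulH x (h1 A) = x) /\
      (forall x, relabel assoc3 (tmap comul id (comul x))
                 = tmap id comul (comul x)) /\
      (forall x, counit_l (comul x) = x /\ counit_r (comul x) = x) /\
      ((forall x y, comul (mulH x y) = mulHH (comul x) (comul y))
        /\ comul (h1 A) = tens (h1 A) (h1 A)) /\
      ((forall x y, counit (mulH x y) = counit x * counit y)
        /\ counit (h1 A) = 1) /\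
      (forall x, multH (tmap antip id (comul x)) = counit x *: h1 A
              /\ multH (tmap id antip (comul x)) = counit x *: h1 A)).

Definition mulMH {M : monomType} (u v : {malg k[(M * I)%type]}) : {malg k[(M * I)%type]} :=
  ext (fun p => ext (fun q =>
     tens ((bv p.1 : {malg k[M]}) * bv q.1) (mulH (bv p.2) (bv q.2))) v) u.
Definition oneMH {M : monomType} : {malg k[(M * I)%type]} :=
  tens (1 : {malg k[M]}) (h1 A).

(* S(t_H) = symmetric algebra on the copy t_H of H *)
Definition SymH := {malg k[{cmonom I}]}.
Definition tvar (x : {malg k[I]}) : SymH := ext (fun i => bv (ucm i)) x.
(* T(X_H) = tensor algebra on the copy X_H of H *)
Definition TensH := {malg k[{fmonom I}]}.
Definition Xvar (x : {malg k[I]}) : TensH := ext (fun i => bv (fmu i)) x.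

(* mu : T(X_H) -> S(t_H) (x) H, the algebra map with
   mu(X_x) = t_{x_1} (x) x_2 *)
Definition muX (x : {malg k[I]}) : {malg k[({cmonom I} * I)%type]} :=
  tmap tvar id (comul x).
Definition mu (w : TensH) : {malg k[({cmonom I} * I)%type]} :=
  ext (fun m : {fmonom I} =>
         foldr mulMH oneMH [seq muX (bv i) | i <- fmonom_val m]) w.

(* delta_T : T(X_H) -> T(X_H) (x) H, the algebra map with
   delta_T(X_x) = X_{x_1} (x) x_2 *)
Definition deltaX (x : {malg k[I]}) : {malg k[({fmonom I} * I)%type]} :=
  tmap Xvar id (comul x).
Definition deltaT (w : TensH) : {malg k[({fmonom I} * I)%type]} :=
  ext (fun m : {fmonom I} =>
         foldr mulMH oneMH [seq deltaX (bv i) | i <- fmonom_val m]) w.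

(* The class of w in U_H = T(X_H)/ker mu is right H-coinvariant:
   delta(pi w) = pi w (x) 1 in U_H (x) H; this is tested after applying
   the injective map mubar (x) id : U_H (x) H -> (S(t_H) (x) H) (x) H. *)
Definition coinvT (w : TensH) : Prop :=
  tmap mu id (deltaT w) = tens (mu w) (h1 A).

Definition in_mubar_VH (v : {malg k[({cmonom I} * I)%type]}) : Prop :=
  exists w : TensH, coinvT w /\ mu w = v.

Definition p_el (x : {malg k[I]}) : SymH :=
  ext (fun q : I * I => tvar (bv q.1) * tvar (antip (bv q.2))) (comul x).
Definition q_el (x y : {malg k[I]}) : SymH :=
  ext (fun q1 : I * I => ext (fun q2 : I * I =>
     tvar (bv q1.1) * tvar (bv q2.1)
       * tvar (antip (mulH (bv q1.2) (bv q2.2)))) (comul y)) (comul x).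

End Hopf.

(* Main.v *)
Require Import Defs.
From HB Require Import structures.
From mathcomp Require Import all_boot all_order all_algebra.
From mathcomp Require Import finmap.
From mathcomp.multinomials Require Import monalg.
Set Implicit Arguments.
Unset Strict Implicit.
Unset Printing Implicit Defensive.
Import GRing.Theory.
Local Open Scope ring_scope.




Section Lin.
Variable k : fieldType.

Definition lin {U W : lmodType k} (L : U -> W) :=
  forall a u v, L (a *: u + v) = a *: L u + L v.

Lemma lin0 {U W : lmodType k} (L : U -> W) : lin L -> L 0 = 0.
Proof.
move=> hL; have := hL 1 0 0; rewrite scale1r addr0 scale1r => h.
by apply/esym/(addrI (L 0)); rewrite addr0 -h.
Qed.

Lemma linZ {U W : lmodType k} (L : U -> W) a u : lin L -> L (a *: u) = a *: L u.
Proof. by move=> hL; rewrite -[a *: u]addr0 hL lin0 // addr0. Qed.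

Lemma linD {U W : lmodType k} (L : U -> W) u v : lin L -> L (u + v) = L u + L v.
Proof. by move=> hL; have := hL 1 u v; rewrite !scale1r. Qed.

Lemma lin_sum {U W : lmodType k} (L : U -> W) (T : Type) (r : seq T) (F : T -> U) :
  lin L -> L (\sum_(t <- r) F t) = \sum_(t <- r) L (F t).
Proof.
move=> hL; elim: r => [|t r IH]; first by rewrite !big_nil lin0.
by rewrite !big_cons linD // IH.
Qed.

Lemma lin_comp {U V W : lmodType k} (L1 : V -> W) (L2 : U -> V) :
  lin L1 -> lin L2 -> lin (fun u => L1 (L2 u)).
Proof. by move=> h1 h2 a u v; rewrite h2 h1. Qed.

Lemma lin_id {U : lmodType k} : lin (fun u : U => u).
Proof. by []. Qed.

Lemma lin_cst0 {U W : lmodType k} : lin (fun u : U => (0 : W)).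
Proof. by move=> a u v; rewrite scaler0 addr0. Qed.

Lemma lin_add {U W : lmodType k} (L1 L2 : U -> W) :
  lin L1 -> lin L2 -> lin (fun u => L1 u + L2 u).
Proof.
move=> h1 h2 a u v; rewrite h1 h2 scalerDr.
by rewrite -!addrA; congr (_ + _); rewrite addrCA.
Qed.

Lemma lin_scale {U W : lmodType k} (L : U -> W) c :
  lin L -> lin (fun u => c *: L u).
Proof. by move=> h a u v; rewrite h scalerDr !scalerA mulrC. Qed.

Lemma lin_sumf {U W : lmodType k} (T : Type) (r : seq T) (F : T -> U -> W) :
  (forall t, lin (F t)) -> lin (fun u => \sum_(t <- r) F t u).
Proof.
move=> hF; elim: r => [|t r IH].
  by move=> a u v; rewrite !big_nil scaler0 addr0.
move=> a u v; rewrite !big_cons.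
by apply: (lin_add (L1 := F t) (L2 := fun u => \sum_(t <- r) F t u)).
Qed.

Section Ext.
Context {J : choiceType} {W : lmodType k}.

Lemma extEw (f : J -> W) (v : {malg k[J]}) (d : {fset J}) :
  (msupp v `<=` d)%fset -> ext f v = \sum_(j <- d) v@_j *: f j.
Proof.
move=> le; rewrite /ext (big_fset_incl _ le) //= => x _ /mcoeff_outdom ->.
by rewrite scale0r.
Qed.

Lemma lin_ext (f : J -> W) : lin (ext f).
Proof.
move=> a u v.
rewrite (@extEw f (a *: u + v) (msupp u `|` msupp v)%fset); last first.
  apply: (fsubset_trans (msuppD_le (a *: u) v)).
  exact: (fsetSU (msupp v) (msuppZ_le a u)).
rewrite (@extEw f u (msupp u `|` msupp v)%fset) ?fsubsetUl //.
rewrite (@extEw f v (msupp u `|` msupp v)%fset) ?fsubsetUr //.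
rewrite scaler_sumr -big_split /=; apply: eq_bigr => j _.
by rewrite mcoeffD mcoeffZ scalerDl scalerA.
Qed.

Lemma ext_bv (f : J -> W) j : ext f (bv j) = f j.
Proof.
by rewrite (@extEw f _ [fset j]%fset) ?msuppU_le // big_seq_fset1 mcoeffUU scale1r.
Qed.

Lemma ext_fD (f g : J -> W) a v :
  ext (fun j => a *: f j + g j) v = a *: ext f v + ext g v.
Proof.
by rewrite /ext scaler_sumr -big_split; apply: eq_bigr => j _;
  rewrite scalerDr !scalerA mulrC.
Qed.

Lemma ext_f0 v : ext (fun _ : J => (0 : W)) v = 0.
Proof. by rewrite /ext big1 // => j _; rewrite scaler0. Qed.

Lemma ext_cong (f g : J -> W) v : (forall j, f j = g j) -> ext f v = ext g v.
Proof. by move=> h; apply: eq_bigr => j _; rewrite h. Qed.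

Lemma lin_extf (F : W -> J -> W) (v : {malg k[J]}) :
  (forall j, lin (fun w => F w j)) -> lin (fun w => ext (F w) v).
Proof.
move=> h a u u'; rewrite -ext_fD; apply: ext_cong => j; exact: h.
Qed.

Lemma bv_decomp (v : {malg k[J]}) : v = ext bv v.
Proof.
rewrite {1}(monalgE v) /ext; apply: eq_bigr => j _.
apply/malgP => m; rewrite mcoeffZ !mcoeffU.
by case: (j == m); rewrite ?mulr1n ?mulr0n ?mulr1 ?mulr0.
Qed.

End Ext.

Lemma ext_comp {J : choiceType} {W W' : lmodType k} (L : W -> W') (f : J -> W) v :
  lin L -> L (ext f v) = ext (fun j => L (f j)) v.
Proof.
move=> hL; rewrite /ext lin_sum //; apply: eq_bigr => j _; exact: linZ.
Qed.

Lemma lin_ext_gen {J : choiceType} {U W : lmodType k} (F : U -> J -> W) v :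
  (forall j, lin (fun u => F u j)) -> lin (fun u => ext (F u) v).
Proof.
move=> h a u u'; rewrite -ext_fD; apply: ext_cong => j; exact: h.
Qed.

Lemma lin_eq {J : choiceType} {W : lmodType k} (L1 L2 : {malg k[J]} -> W) v :
  lin L1 -> lin L2 -> (forall j, L1 (bv j) = L2 (bv j)) -> L1 v = L2 v.
Proof.
move=> h1 h2 h; rewrite (bv_decomp v) !ext_comp //; exact: ext_cong.
Qed.

Lemma ext_exch {J L : choiceType} {W : lmodType k} (F : J -> L -> W) u v :
  ext (fun i => ext (fun j => F i j) u) v = ext (fun j => ext (fun i => F i j) v) u.
Proof.
rewrite /ext; under eq_bigr do rewrite scaler_sumr.
rewrite exchange_big /=; apply: eq_bigr => j _; rewrite scaler_sumr.
by apply: eq_bigr => i _; rewrite !scalerA mulrC.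
Qed.

End Lin.



Section Tens.
Variable k : fieldType.

Definition bilin {U V W : lmodType k} (G : U -> V -> W) :=
  (forall v, lin (fun u => G u v)) /\ (forall u, lin (G u)).

Lemma lin_eq2 {J L : choiceType} {W : lmodType k}
  (T1 T2 : {malg k[J]} -> {malg k[L]} -> W) u v :
  bilin T1 -> bilin T2 -> (forall j l, T1 (bv j) (bv l) = T2 (bv j) (bv l)) ->
  T1 u v = T2 u v.
Proof.
move=> [h1 h1'] [h2 h2'] h.
apply: (lin_eq (L1 := fun u => T1 u v) (L2 := fun u => T2 u v)) => // j.
exact: lin_eq.
Qed.

Lemma bilin_ext {J L : choiceType} {W : lmodType k}
  (T : {malg k[J]} -> {malg k[L]} -> W) u v : bilin T ->
  T u v = ext (fun j => ext (fun l => T (bv j) (bv l)) v) u.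
Proof.
move=> [h1 h2]; rewrite {1}(bv_decomp u) (ext_comp (L := fun u => T u v)) //.
apply: ext_cong => j.
by rewrite {1}(bv_decomp v) (ext_comp (L := T (bv j))).
Qed.

Lemma tens_bilin {J L : choiceType} :
  bilin (fun (u : {malg k[J]}) (v : {malg k[L]}) => tens u v).
Proof.
split=> [v|u]; first exact: lin_ext.
by apply: lin_ext_gen => j; apply: lin_ext.
Qed.

Lemma tens_bv {J L : choiceType} (j : J) (l : L) : tens (bv j) (bv l) = bv (j, l) :> {malg k[(J * L)%type]}.
Proof. by rewrite /tens !ext_bv. Qed.

Lemma ext_tens {J L : choiceType} {W : lmodType k} (F : J * L -> W) u v :
  ext F (tens u v) = ext (fun j => ext (fun l => F (j, l)) v) u.
Proof.
rewrite /tens ext_comp; last exact: lin_ext.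
apply: ext_cong => j; rewrite ext_comp; last exact: lin_ext.
by apply: ext_cong => l; rewrite ext_bv.
Qed.

Lemma bilin_comp {U V W W' : lmodType k} (L : W -> W') (G : U -> V -> W) :
  lin L -> bilin G -> bilin (fun u v => L (G u v)).
Proof. by move=> hL [h1 h2]; split=> ?; apply: lin_comp. Qed.

Lemma ext_relabel {J L : choiceType} {W : lmodType k} (F : L -> W) (h : J -> L) w :
  ext F (relabel h w) = ext (fun j => F (h j)) w.
Proof.
rewrite /relabel ext_comp; last exact: lin_ext.
by apply: ext_cong => j; rewrite ext_bv.
Qed.

Lemma ext_tmap {J L J' L' : choiceType} {W : lmodType k} (F : J' * L' -> W)
  (f : {malg k[J]} -> {malg k[J']}) (g : {malg k[L]} -> {malg k[L']}) w :
  ext F (tmap f g w) = ext (fun p => ext F (tens (f (bv p.1)) (g (bv p.2)))) w.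
Proof. by rewrite /tmap ext_comp //; apply: lin_ext. Qed.

End Tens.

Section Calc.
Variables (k : fieldType) (I : choiceType) (A : HopfData k I).
Hypothesis hA : is_hopf A.

Local Notation H := {malg k[I]}.
Local Notation m := (mulH A).
Local Notation S := (antip A).
Local Notation eps := (counit A).
Local Notation one := (h1 A).

Definition Sw {W : lmodType k} (G : H -> H -> W) (x : H) : W :=
  ext (fun p : I * I => G (bv p.1) (bv p.2)) (comul A x).

Lemma lin_comul : lin (comul A). Proof. exact: lin_ext. Qed.
Lemma lin_S : lin S. Proof. exact: lin_ext. Qed.
Lemma lin_ml v : lin (fun u => m u v). Proof. exact: lin_ext. Qed.
Lemma lin_mr u : lin (m u).
Proof. by apply: lin_ext_gen => i; apply: lin_ext. Qed.
Lemma bilin_m : bilin m.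
Proof. by split; [apply: lin_ml | apply: lin_mr]. Qed.
Lemma m_bv i j : m (bv i) (bv j) = hm A i j.
Proof. by rewrite /mulH !ext_bv. Qed.

Lemma eps_bv i : eps (bv i) = he A i.
Proof.
rewrite /counit msuppU oner_eq0 big_seq_fset1 mcoeffUU mul1r //.
Qed.

Lemma eps_lin a u v : eps (a *: u + v) = a * eps u + eps v.
Proof.
have le : (msupp (a *: u + v) `<=` msupp u `|` msupp v)%fset.
  apply: (fsubset_trans (msuppD_le (a *: u) v)).
  exact: (fsetSU (msupp v) (msuppZ_le a u)).
have E : forall w : H, (msupp w `<=` msupp u `|` msupp v)%fset ->
   eps w = \sum_(i <- (msupp u `|` msupp v)%fset) w@_i * he A i.
  move=> w lw; rewrite /counit (big_fset_incl _ lw) //= => x _ /mcoeff_outdom ->.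
  by rewrite mul0r.
rewrite (E _ le) (E u) ?fsubsetUl // (E v) ?fsubsetUr // mulr_sumr -big_split.
by apply: eq_bigr => i _; rewrite mcoeffD mcoeffZ mulrDl mulrA.
Qed.

Lemma lin_Sw {W : lmodType k} (G : H -> H -> W) : lin (Sw G).
Proof. exact: (lin_comp (lin_ext _) lin_comul). Qed.

Lemma Sw_push {W W' : lmodType k} (L : W -> W') (G : H -> H -> W) x :
  lin L -> L (Sw G x) = Sw (fun a b => L (G a b)) x.
Proof. exact: ext_comp. Qed.

Lemma Sw_cong {W : lmodType k} (G G' : H -> H -> W) x :
  (forall i j, G (bv i) (bv j) = G' (bv i) (bv j)) -> Sw G x = Sw G' x.
Proof. by move=> h; apply: ext_cong => p; apply: h. Qed.

Lemma Sw_fD {W : lmodType k} (G G' : H -> H -> W) c x :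
  Sw (fun a b => c *: G a b + G' a b) x = c *: Sw G x + Sw G' x.
Proof. exact: ext_fD. Qed.

Lemma Sw_Z {W : lmodType k} (G : H -> H -> W) c x :
  Sw (fun a b => c *: G a b) x = c *: Sw G x.
Proof.
rewrite /Sw /ext scaler_sumr; apply: eq_bigr => p _.
by rewrite !scalerA mulrC.
Qed.

Lemma lin_Swf {U W : lmodType k} (F : U -> H -> H -> W) x :
  (forall a b, lin (fun z => F z a b)) -> lin (fun z => Sw (F z) x).
Proof. by move=> h; apply: lin_ext_gen => p; apply: h. Qed.

Lemma Sw_exch {W : lmodType k} (F : H -> H -> H -> H -> W) x y :
  Sw (fun a b => Sw (F a b) y) x = Sw (fun c d => Sw (fun a b => F a b c d) x) y.
Proof. exact: ext_exch. Qed.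

Lemma Sw_bv {W : lmodType k} (G : H -> H -> W) i :
  Sw G (bv i) = ext (fun p : I * I => G (bv p.1) (bv p.2)) (hD A i).
Proof. by rewrite /Sw /comul ext_bv. Qed.

Lemma Sw_CA {W : lmodType k} (T : H -> H -> H -> W) x :
  Sw (fun a b => Sw (fun c d => T c d b) a) x =
  Sw (fun a b => Sw (fun c d => T a c d) b) x.
Proof.
have [_ [_ [hcoa _]]] := hA.
have E := congr1 (ext (fun t : I * (I * I) => T (bv t.1) (bv t.2.1) (bv t.2.2))) (hcoa x).
rewrite ext_relabel !ext_tmap in E.
rewrite /Sw; apply: etrans (etrans E _).
  apply: ext_cong => p; rewrite ext_tens /=.
  by apply: ext_cong => q; rewrite ext_bv.
apply: ext_cong => p; rewrite ext_tens /= ext_bv.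
by apply: ext_cong => q.
Qed.

Lemma Sw_CUl {W : lmodType k} (L : H -> W) x :
  lin L -> Sw (fun a b => eps a *: L b) x = L x.
Proof.
have [_ [_ [_ [hcu _]]]] := hA.
move=> hL; have [E _] := hcu x.
rewrite -{2}E /counit_l ext_comp //; apply: ext_cong => p.
by rewrite eps_bv linZ.
Qed.

Lemma Sw_CUr {W : lmodType k} (L : H -> W) x :
  lin L -> Sw (fun a b => eps b *: L a) x = L x.
Proof.
have [_ [_ [_ [hcu _]]]] := hA.
move=> hL; have [_ E] := hcu x.
rewrite -{2}E /counit_r ext_comp //; apply: ext_cong => p.
by rewrite eps_bv linZ.
Qed.

Lemma multH_tens u v : multH A (tens u v) = m u v.
Proof.
rewrite /multH ext_tens /mulH; apply: ext_cong => i.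
by apply: ext_cong => j; rewrite /= !ext_bv.
Qed.

Lemma Sw_AL x : Sw (fun a b => m (S a) b) x = eps x *: one.
Proof.
have [_ [_ [_ [_ [_ [_ hant]]]]]] := hA.
have [E _] := hant x; rewrite -E /tmap ext_comp; last exact: lin_ext.
by apply: ext_cong => p; rewrite multH_tens.
Qed.

Lemma Sw_AR x : Sw (fun a b => m a (S b)) x = eps x *: one.
Proof.
have [_ [_ [_ [_ [_ [_ hant]]]]]] := hA.
have [_ E] := hant x; rewrite -E /tmap ext_comp; last exact: lin_ext.
by apply: ext_cong => p; rewrite multH_tens.
Qed.

Lemma Sw_DM {W : lmodType k} (G : H -> H -> W) x y : bilin G ->
  Sw G (m x y) = Sw (fun a b => Sw (fun c d => G (m a c) (m b d)) y) x.
Proof.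
have [_ [_ [_ [_ [[hdm _] _]]]]] := hA.
move=> hG; rewrite /Sw hdm /mulHH ext_comp; last exact: lin_ext.
apply: ext_cong => p; rewrite ext_comp; last exact: lin_ext.
apply: ext_cong => q; rewrite ext_tens [RHS](bilin_ext _ _ hG).
by [].
Qed.

Lemma Sw_D1 {W : lmodType k} (G : H -> H -> W) : bilin G -> Sw G one = G one one.
Proof.
have [_ [_ [_ [_ [[_ hd1] _]]]]] := hA.
by move=> hG; rewrite /Sw hd1 ext_tens [RHS](bilin_ext _ _ hG).
Qed.

Lemma m1l x : m one x = x.
Proof. by have [_ [hu _]] := hA; have [] := hu x. Qed.
Lemma m1r x : m x one = x.
Proof. by have [_ [hu _]] := hA; have [] := hu x. Qed.
Lemma mA x y z : m (m x y) z = m x (m y z).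
Proof. by have [ha _] := hA; apply: ha. Qed.

End Calc.



Section Calc2.
Variables (k : fieldType) (I : choiceType) (A : HopfData k I).
Hypothesis hA : is_hopf A.

Local Notation H := {malg k[I]}.
Local Notation m := (mulH A).
Local Notation S := (antip A).
Local Notation eps := (counit A).
Local Notation one := (h1 A).
Opaque Sw.
Local Notation Sw := (Sw A).

Lemma I1 {W : lmodType k} (G' : H -> H -> W) v : bilin G' ->
  Sw (fun v1 r => Sw (fun v2 r' => Sw (fun v3 v4 =>
     G' (m v1 (S v4)) (m v2 (S v3))) r') r) v = eps v *: G' one one.
Proof.
move=> [hG1 hG2].
transitivity (Sw (fun v1 r => G' (m v1 (S r)) one) v).
  apply: Sw_cong => i j.
  rewrite -(Sw_CA hA (fun a c d => G' (m (bv i) (S d)) (m a (S c)))).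
  transitivity (Sw (fun s v4 => eps s *: G' (m (bv i) (S v4)) one) (bv j)).
    apply: Sw_cong => s t.
    rewrite -(Sw_push A (L := G' (m (bv i) (S (bv t)))) _ _ (hG2 _)).
    by rewrite (Sw_AR hA) linZ.
  apply: (Sw_CUl hA (L := fun z => G' (m (bv i) (S z)) one)).
  exact: lin_comp (hG1 _) (lin_comp (lin_mr A _) (lin_S A)).
rewrite -(Sw_push A (L := fun z => G' z one) (fun a b => m a (S b))) //.
by rewrite (Sw_AR hA) (linZ (L := fun z => G' z one)).
Qed.

Lemma bilin_Gp {W : lmodType k} (G : H -> H -> W) a : bilin G ->
  bilin (fun p q => Sw (fun e f => G (m e p) (m f q)) (S a)).
Proof.
move=> [hG1 hG2]; split=> [q|p].
  apply: (lin_Swf A (F := fun z e f => G (m e z) (m f q))) => e f.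
  exact: lin_comp (hG1 _) (lin_mr A _).
apply: (lin_Swf A (F := fun z e f => G (m e p) (m f z))) => e f.
exact: lin_comp (hG2 _) (lin_mr A _).
Qed.

Lemma SwS {W : lmodType k} (G : H -> H -> W) u : bilin G ->
  Sw G (S u) = Sw (fun a b => G (S b) (S a)) u.
Proof.
move=> hG; have [hG1 hG2] := hG.
pose Gp a p q := Sw (fun e f => G (m e p) (m f q)) (S a).
transitivity (Sw (fun a b => eps b *: Sw G (S a)) u).
  symmetry; apply: (Sw_CUr hA (L := fun a => Sw G (S a))).
  exact: lin_comp (lin_Sw A G) (lin_S A).
transitivity (Sw (fun a b => Sw (fun v1 r => Sw (fun v2 r' => Sw (fun v3 v4 =>
     Gp a (m v1 (S v4)) (m v2 (S v3))) r') r) b) u).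
  apply: Sw_cong => i j; rewrite I1; last exact: bilin_Gp.
  congr (_ *: _); apply: Sw_cong => e f; by rewrite !m1r.
transitivity (Sw (fun a b => Sw (fun t r' => Sw (fun v1 v2 => Sw (fun v3 v4 =>
     Gp a (m v1 (S v4)) (m v2 (S v3))) r') t) b) u).
  apply: Sw_cong => i j.
  exact: esym (Sw_CA hA (fun v1 v2 r' => Sw (fun v3 v4 =>
     Gp (bv i) (m v1 (S v4)) (m v2 (S v3))) r') (bv j)).
transitivity (Sw (fun c r' => Sw (fun a t => Sw (fun v1 v2 => Sw (fun v3 v4 =>
     Gp a (m v1 (S v4)) (m v2 (S v3))) r') t) c) u).
  exact: esym (Sw_CA hA (fun a t r' => Sw (fun v1 v2 => Sw (fun v3 v4 =>
     Gp a (m v1 (S v4)) (m v2 (S v3))) r') t) u).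
transitivity (Sw (fun c r' => eps c *: Sw (fun v3 v4 => G (S v4) (S v3)) r') u);
  last first.
  apply: (Sw_CUl hA (L := Sw (fun v3 v4 => G (S v4) (S v3)))).
  exact: lin_Sw.
apply: Sw_cong => i j; rewrite -Sw_Z.
transitivity (Sw (fun a t => Sw (fun v3 v4 => Sw (fun v1 v2 =>
    Gp a (m v1 (S v4)) (m v2 (S v3))) t) (bv j)) (bv i)).
  apply: Sw_cong => a t.
  exact: (Sw_exch A (fun v1 v2 v3 v4 => Gp (bv a) (m v1 (S v4)) (m v2 (S v3))) (bv t) (bv j)).
transitivity (Sw (fun v3 v4 => Sw (fun a t => Sw (fun v1 v2 =>
    Gp a (m v1 (S v4)) (m v2 (S v3))) t) (bv i)) (bv j)).
  exact: (Sw_exch A (fun a t v3 v4 => Sw (fun v1 v2 =>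
    Gp a (m v1 (S v4)) (m v2 (S v3))) t) (bv i) (bv j)).
apply: Sw_cong => p q.
pose G'' p' q' := G (m p' (S (bv q))) (m q' (S (bv p))).
have hG'' : bilin G''.
  split=> z; rewrite /G''.
    exact: lin_comp (hG1 _) (lin_ml A _).
  exact: lin_comp (hG2 _) (lin_ml A _).
transitivity (Sw (fun a t => Sw G'' (m (S a) t)) (bv i)).
  apply: Sw_cong => a t.
  rewrite (@Sw_DM k I A hA W G'' (S (bv a)) (bv t) hG'') /Gp.
  apply: etrans (@Sw_exch k I A W (fun v1 v2 e f => G (m e (m v1 (S (bv q)))) (m f (m v2 (S (bv p))))) (bv t) (S (bv a))) _.
  apply: Sw_cong => e f; apply: Sw_cong => v1 v2; by rewrite /G'' !mA.
transitivity (Sw G'' (Sw (fun a t => m (S a) t) (bv i))).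
  symmetry; exact: (@Sw_push k I A _ W (Sw G'') (fun a t => m (S a) t) (bv i) (lin_Sw A G'')).
rewrite (Sw_AL hA (bv i)) (linZ (L := Sw G'')); last exact: lin_Sw.
by rewrite (@Sw_D1 k I A hA W G'' hG'') /G'' !(m1l hA).
Qed.

Lemma KL {W : lmodType k} (B : H -> H -> W) b : bilin B ->
  Sw (fun d u => Sw (fun e f => B e (m d f)) (S u)) b = B (S b) one.
Proof.
move=> [hB1 hB2].
transitivity (Sw (fun d u => Sw (fun u1 u2 => B (S u2) (m d (S u1))) u) b).
  apply: Sw_cong => i j.
  refine (@SwS W (fun e f => B e (m (bv i) f)) (bv j) _).
  by split=> z; [apply: hB1 | apply: lin_comp (hB2 _) (lin_mr A _)].
transitivity (Sw (fun d' u2 => Sw (fun d u1 => B (S u2) (m d (S u1))) d') b).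
  exact: esym (@Sw_CA k I A hA W (fun d u1 u2 => B (S u2) (m d (S u1))) b).
transitivity (Sw (fun d' u2 => eps d' *: B (S u2) one) b).
  apply: Sw_cong => i j.
  transitivity (B (S (bv j)) (Sw (fun d u1 => m d (S u1)) (bv i))).
    symmetry; exact: (@Sw_push k I A _ W (B (S (bv j))) (fun d u1 => m d (S u1)) (bv i) (hB2 _)).
  by rewrite (Sw_AR hA (bv i)) (linZ (L := B (S (bv j)))).
apply: (@Sw_CUl k I A hA W (fun z => B (S z) one) b).
exact: lin_comp (hB1 _) (lin_S A).
Qed.

End Calc2.



Section MAlg.
Variables (k : fieldType) (M : monomType).

Lemma malg_scaleAr (c : k) (u v : {malg k[M]}) : u * (c *: v) = c *: (u * v).
Proof.
apply/malgP => mm.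
rewrite mcoeffZ (mcoeffMlw _ (fsubset_refl (msupp u)) (msuppZ_le c v)) mcoeffMl.
rewrite mulr_sumr; apply: eq_bigr => i _; rewrite mulr_sumr; apply: eq_bigr => j _.
by rewrite mcoeffZ mulrnAr mulrCA.
Qed.

Lemma lin_mulL (z : {malg k[M]}) : lin (fun s => s * z).
Proof. by move=> a u v; rewrite mulrDl scalerAl. Qed.

Lemma lin_mulR (z : {malg k[M]}) : lin (fun s => z * s).
Proof. by move=> a u v; rewrite mulrDr malg_scaleAr. Qed.

Lemma lin_tensl {J L : choiceType} (v : {malg k[L]}) :
  lin (fun u : {malg k[J]} => tens u v).
Proof. exact: (@tens_bilin k J L).1. Qed.

Lemma lin_tensr {J L : choiceType} (u : {malg k[J]}) :
  lin (fun v : {malg k[L]} => tens u v).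
Proof. exact: (@tens_bilin k J L).2. Qed.

End MAlg.

Section Mu.
Variables (k : fieldType) (I : choiceType) (A : HopfData k I).
Hypothesis hA : is_hopf A.

Local Notation H := {malg k[I]}.
Local Notation m := (mulH A).
Local Notation S := (antip A).
Local Notation eps := (counit A).
Local Notation one := (h1 A).
Opaque Sw.
Local Notation Sw := (Sw A).

Section Generic.
Variable (M : monomType).
Local Notation MH := {malg k[(M * I)%type]}.
Local Notation mMH := (@mulMH k I A M).

Lemma lin_mMHl (v : MH) : lin (fun u => mMH u v).
Proof. exact: lin_ext. Qed.

Lemma lin_mMHr (u : MH) : lin (mMH u).
Proof. by apply: lin_ext_gen => p; apply: lin_ext. Qed.

Lemma mMH_tens (s s' : {malg k[M]}) (h h' : H) :
  mMH (tens s h) (tens s' h') = tens (s * s') (m h h').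
Proof.
have hT2 : forall (s'' : {malg k[M]}) (h'' : H), bilin (fun s h => tens (s * s'') (m h h'')).
  move=> s'' h''; split=> z.
    exact: (lin_comp (L1 := fun s => tens s (m z h'')) (L2 := fun s => s * s'') (lin_tensl _) (lin_mulL _)).
  exact: (lin_comp (L1 := tens (z * s'')) (L2 := fun h => m h h'') (lin_tensr _) (lin_ml A _)).
pose T1 s h := mMH (tens s h) (tens s' h').
have hT1 : bilin T1.
  split=> z.
    exact: (lin_comp (L1 := fun u => mMH u (tens s' h')) (L2 := fun s => tens s z) (lin_mMHl _) (lin_tensl z)).
  exact: (lin_comp (L1 := fun u => mMH u (tens s' h')) (L2 := fun h => tens z h) (lin_mMHl _) (lin_tensr z)).
apply: (@lin_eq2 k M I _ T1 (fun s h => tens (s * s') (m h h')) s h hT1 (hT2 _ _)) => j l.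
rewrite /T1 tens_bv /mulMH ext_bv /= ext_tens.
have hT3 : bilin (fun s h => tens (bv j * s) (m (bv l) h)).
  split=> z.
    exact: (lin_comp (L1 := fun s => tens s (m (bv l) z)) (L2 := fun s => bv j * s) (lin_tensl _) (lin_mulR _)).
  exact: (lin_comp (L1 := tens (bv j * z)) (L2 := fun h => m (bv l) h) (lin_tensr _) (lin_mr A _)).
by rewrite [RHS](bilin_ext _ _ hT3).
Qed.

Lemma mMH_one (u : MH) : mMH u (oneMH A) = u.
Proof.
apply: (lin_eq (L1 := fun u => mMH u (oneMH A)) (L2 := fun u => u)).
- exact: lin_mMHl.
- exact: lin_id.
case=> j l; rewrite -tens_bv /oneMH mMH_tens mulr1.
by rewrite (m1r hA).
Qed.

Definition Phi (F : H -> MH) (w : TensH k I) : MH :=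
  ext (fun mm : {fmonom I} =>
         foldr mMH (oneMH A) [seq F (bv i) | i <- fmonom_val mm]) w.

Lemma lin_Phi F : lin (Phi F). Proof. exact: lin_ext. Qed.

End Generic.

Lemma bv_mul (K : monomType) (x y : K) :
  (bv x * bv y : {malg k[K]}) = bv (mmul x y).
Proof. by rewrite /bv malgM_def fgmulUU mulr1. Qed.

Lemma lin_Xvar : lin (@Xvar k I). Proof. exact: lin_ext. Qed.

Lemma Xvar_bv i : @Xvar k I (bv i) = bv (fmu i).
Proof. by rewrite /Xvar ext_bv. Qed.

Lemma fmu_val2 (i j : I) : fmonom_val (mmul (fmu i) (fmu j)) = [:: i; j].
Proof. by rewrite fmM !fmuE. Qed.

Lemma fmu_val3 (i j l : I) : fmonom_val (mmul (fmu i) (mmul (fmu j) (fmu l))) = [:: i; j; l].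
Proof. by rewrite !fmM !fmuE. Qed.



Section Generic2.
Variable (M : monomType).
Local Notation MH := {malg k[(M * I)%type]}.
Local Notation mMH := (@mulMH k I A M).
Variable (F : H -> MH).
Hypothesis hF : lin F.

Lemma Phi2 (a c : H) : Phi F (Xvar a * Xvar c) = mMH (F a) (F c).
Proof.
pose T1 a c := Phi F (Xvar a * Xvar c).
have hT1 : bilin T1.
  split=> z.
    exact: lin_comp (lin_Phi F) (lin_comp (lin_mulL (Xvar z)) lin_Xvar).
  exact: lin_comp (lin_Phi F) (lin_comp (lin_mulR (Xvar z)) lin_Xvar).
have hT2 : bilin (fun a c => mMH (F a) (F c)).
  split=> z.
    exact: lin_comp (lin_mMHl _) hF.
  exact: lin_comp (lin_mMHr _) hF.
apply: (@lin_eq2 k I I _ T1 _ a c hT1 hT2) => i j.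
rewrite /T1 !Xvar_bv bv_mul /Phi ext_bv fmu_val2 /=.
by rewrite mMH_one.
Qed.

Lemma Phi3 (a c e : H) :
  Phi F (Xvar a * (Xvar c * Xvar e)) = mMH (F a) (mMH (F c) (F e)).
Proof.
apply: (lin_eq (L1 := fun a => Phi F (Xvar a * (Xvar c * Xvar e)))
               (L2 := fun a => mMH (F a) (mMH (F c) (F e)))).
- exact: lin_comp (lin_Phi F) (lin_comp (lin_mulL _) lin_Xvar).
- exact: lin_comp (lin_mMHl _) hF.
move=> i.
pose T1 c e := Phi F (Xvar (bv i) * (Xvar c * Xvar e)).
have hT1 : bilin T1.
  split=> z.
    exact: lin_comp (lin_Phi F) (lin_comp (lin_mulR _) (lin_comp (lin_mulL (Xvar z)) lin_Xvar)).
  exact: lin_comp (lin_Phi F) (lin_comp (lin_mulR _) (lin_comp (lin_mulR (Xvar z)) lin_Xvar)).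
have hT2 : bilin (fun c e => mMH (F (bv i)) (mMH (F c) (F e))).
  split=> z.
    exact: lin_comp (lin_mMHr _) (lin_comp (lin_mMHl _) hF).
  exact: lin_comp (lin_mMHr _) (lin_comp (lin_mMHr _) hF).
apply: (@lin_eq2 k I I _ T1 _ c e hT1 hT2) => j l.
rewrite /T1 !Xvar_bv !bv_mul /Phi ext_bv fmu_val3 /=.
by rewrite mMH_one.
Qed.

End Generic2.

End Mu.



Section Main.
Variables (k : fieldType) (I : choiceType) (A : HopfData k I).
Hypothesis hA : is_hopf A.

Local Notation H := {malg k[I]}.
Local Notation m := (mulH A).
Local Notation S := (antip A).
Local Notation one := (h1 A).
Opaque Sw.
Local Notation Sw := (Sw A).

Variable (M : monomType).
Local Notation MH := {malg k[(M * I)%type]}.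
Local Notation mMH := (@mulMH k I A M).
Variable (g : H -> {malg k[M]}).
Hypothesis hg : lin g.

Definition Fg (a : H) : MH := Sw (fun c d => tens (g c) d) a.

Lemma Exp2 a c : mMH (Fg a) (Fg c) =
  Sw (fun a1 a2 => Sw (fun c1 c2 => tens (g a1 * g c1) (m a2 c2)) c) a.
Proof.
transitivity (Sw (fun a1 a2 => mMH (tens (g a1) a2) (Fg c)) a).
  exact: (@Sw_push k I A _ _ (fun z => mMH z (Fg c)) (fun a1 a2 => tens (g a1) a2) a (lin_mMHl _ _)).
apply: Sw_cong => i j.
transitivity (Sw (fun c1 c2 => mMH (tens (g (bv i)) (bv j)) (tens (g c1) c2)) c).
  exact: (@Sw_push k I A _ _ (mMH (tens (g (bv i)) (bv j))) (fun c1 c2 => tens (g c1) c2) c (lin_mMHr _ _)).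
by apply: Sw_cong => p q; rewrite mMH_tens.
Qed.

Lemma Exp3 a c e : mMH (Fg a) (mMH (Fg c) (Fg e)) =
  Sw (fun a1 a2 => Sw (fun c1 c2 => Sw (fun e1 e2 =>
     tens (g a1 * (g c1 * g e1)) (m a2 (m c2 e2))) e) c) a.
Proof.
pose X := Sw (fun c1 c2 => Sw (fun e1 e2 => tens (g c1 * g e1) (m c2 e2)) e) c.
transitivity (mMH (Fg a) X).
  exact: (congr1 (mMH (Fg a)) (Exp2 c e)).
transitivity (Sw (fun a1 a2 => mMH (tens (g a1) a2) X) a).
  exact: (@Sw_push k I A _ _ (fun z => mMH z X) (fun a1 a2 => tens (g a1) a2) a (lin_mMHl _ _)).
apply: Sw_cong => i j.
pose Y := tens (g (bv i)) (bv j).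
transitivity (Sw (fun c1 c2 => mMH Y (Sw (fun e1 e2 => tens (g c1 * g e1) (m c2 e2)) e)) c).
  exact: (@Sw_push k I A _ _ (mMH Y) _ c (lin_mMHr _ _)).
apply: Sw_cong => p q.
transitivity (Sw (fun e1 e2 => mMH Y (tens (g (bv p) * g e1) (m (bv q) e2))) e).
  exact: (@Sw_push k I A _ _ (mMH Y) _ e (lin_mMHr _ _)).
by apply: Sw_cong => r t; rewrite /Y mMH_tens.
Qed.

Lemma Gp_thm x : Sw (fun a b => mMH (Fg a) (Fg (S b))) x =
  tens (Sw (fun a b => g a * g (S b)) x) one.
Proof.
transitivity (Sw (fun a b => Sw (fun a1 a2 => Sw (fun c1 c2 =>
   tens (g a1 * g c1) (m a2 c2)) (S b)) a) x).
  by apply: Sw_cong => i j; apply: Exp2.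
transitivity (Sw (fun a1 b' => Sw (fun a2 b => Sw (fun c1 c2 =>
   tens (g a1 * g c1) (m a2 c2)) (S b)) b') x).
  exact: (@Sw_CA k I A hA _ (fun a1 a2 b => Sw (fun c1 c2 => tens (g a1 * g c1) (m a2 c2)) (S b)) x).
transitivity (Sw (fun a1 b' => tens (g a1 * g (S b')) one) x).
  apply: Sw_cong => i j.
  have hB : bilin (fun c1 (h : H) => tens (g (bv i) * g c1) h).
    split=> z.
      exact: lin_comp (lin_tensl _) (lin_comp (lin_mulR _) hg).
    exact: lin_tensr.
  refine (@KL k I A hA _ (fun c1 (h : H) => tens (g (bv i) * g c1) h) (bv j) hB).
symmetry; exact: (@Sw_push k I A _ _ (fun s => tens s one) (fun a b => g a * g (S b)) x (lin_tensl _)).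
Qed.

Lemma Gq_thm x y :
  Sw (fun a b => Sw (fun c d => mMH (Fg a) (mMH (Fg c) (Fg (S (m b d))))) y) x =
  tens (Sw (fun a b => Sw (fun c d => g a * (g c * g (S (m b d)))) y) x) one.
Proof.
transitivity (Sw (fun a b => Sw (fun c d => Sw (fun a1 a2 => Sw (fun c1 c2 => Sw (fun e1 e2 =>
   tens (g a1 * (g c1 * g e1)) (m a2 (m c2 e2))) (S (m b d))) c) a) y) x).
  apply: Sw_cong => i j; apply: Sw_cong => p q; apply: Exp3.
transitivity (Sw (fun a b => Sw (fun a1 a2 => Sw (fun c d => Sw (fun c1 c2 => Sw (fun e1 e2 =>
   tens (g a1 * (g c1 * g e1)) (m a2 (m c2 e2))) (S (m b d))) c) y) a) x).
  apply: Sw_cong => i j.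
  exact: (@Sw_exch k I A _ (fun c d a1 a2 => Sw (fun c1 c2 => Sw (fun e1 e2 =>
   tens (g a1 * (g c1 * g e1)) (m a2 (m c2 e2))) (S (m (bv j) d))) c) y (bv i)).
transitivity (Sw (fun a1 b' => Sw (fun a2 b => Sw (fun c d => Sw (fun c1 c2 => Sw (fun e1 e2 =>
   tens (g a1 * (g c1 * g e1)) (m a2 (m c2 e2))) (S (m b d))) c) y) b') x).
  exact: (@Sw_CA k I A hA _ (fun a1 a2 b => Sw (fun c d => Sw (fun c1 c2 => Sw (fun e1 e2 =>
   tens (g a1 * (g c1 * g e1)) (m a2 (m c2 e2))) (S (m b d))) c) y) x).
transitivity (Sw (fun a1 b' => Sw (fun c1 d' => tens (g a1 * (g c1 * g (S (m b' d')))) one) y) x); last first.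
  transitivity (Sw (fun a1 b' => tens (Sw (fun c1 d' => g a1 * (g c1 * g (S (m b' d')))) y) one) x).
    apply: Sw_cong => i j; symmetry.
    exact: (@Sw_push k I A _ _ (fun s => tens s one) (fun c1 d' => g (bv i) * (g c1 * g (S (m (bv j) d')))) y (lin_tensl _)).
  symmetry; exact: (@Sw_push k I A _ _ (fun s => tens s one) (fun a b => Sw (fun c d => g a * (g c * g (S (m b d)))) y) x (lin_tensl _)).
apply: Sw_cong => i j.
transitivity (Sw (fun c d => Sw (fun a2 b => Sw (fun c1 c2 => Sw (fun e1 e2 =>
   tens (g (bv i) * (g c1 * g e1)) (m a2 (m c2 e2))) (S (m b d))) c) (bv j)) y).
  exact: (@Sw_exch k I A _ (fun a2 b c d => Sw (fun c1 c2 => Sw (fun e1 e2 =>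
   tens (g (bv i) * (g c1 * g e1)) (m a2 (m c2 e2))) (S (m b d))) c) (bv j) y).
transitivity (Sw (fun c d => Sw (fun c1 c2 => Sw (fun a2 b => Sw (fun e1 e2 =>
   tens (g (bv i) * (g c1 * g e1)) (m a2 (m c2 e2))) (S (m b d))) (bv j)) c) y).
  apply: Sw_cong => p q.
  exact: (@Sw_exch k I A _ (fun a2 b c1 c2 => Sw (fun e1 e2 =>
   tens (g (bv i) * (g c1 * g e1)) (m a2 (m c2 e2))) (S (m b (bv q)))) (bv j) (bv p)).
transitivity (Sw (fun c1 d' => Sw (fun c2 d => Sw (fun a2 b => Sw (fun e1 e2 =>
   tens (g (bv i) * (g c1 * g e1)) (m a2 (m c2 e2))) (S (m b d))) (bv j)) d') y).
  exact: (@Sw_CA k I A hA _ (fun c1 c2 d => Sw (fun a2 b => Sw (fun e1 e2 =>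
   tens (g (bv i) * (g c1 * g e1)) (m a2 (m c2 e2))) (S (m b d))) (bv j)) y).
apply: Sw_cong => p q.
transitivity (Sw (fun a2 b => Sw (fun c2 d => Sw (fun e1 e2 =>
   tens (g (bv i) * (g (bv p) * g e1)) (m (m a2 c2) e2)) (S (m b d))) (bv q)) (bv j)).
  apply: etrans (@Sw_exch k I A _ (fun c2 d a2 b => Sw (fun e1 e2 =>
   tens (g (bv i) * (g (bv p) * g e1)) (m a2 (m c2 e2))) (S (m b d))) (bv q) (bv j)) _.
  apply: Sw_cong => r t; apply: Sw_cong => r' t'; apply: Sw_cong => r'' t''.
  by rewrite (mA hA).
have hB : bilin (fun e1 (h : H) => tens (g (bv i) * (g (bv p) * g e1)) h).
  split=> z.
    exact: lin_comp (lin_tensl _) (lin_comp (lin_mulR _) (lin_comp (lin_mulR _) hg)).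
  exact: lin_tensr.
have hK : bilin (fun mm z => Sw (fun e1 e2 => tens (g (bv i) * (g (bv p) * g e1)) (m mm e2)) (S z)).
  split=> z.
    apply: (lin_Swf A (F := fun w e1 e2 => tens (g (bv i) * (g (bv p) * g e1)) (m w e2))) => e1 e2.
    exact: lin_comp (lin_tensr _) (lin_ml A _).
  exact: lin_comp (lin_Sw A _) (lin_S A).
transitivity (Sw (fun mm z => Sw (fun e1 e2 => tens (g (bv i) * (g (bv p) * g e1)) (m mm e2)) (S z)) (m (bv j) (bv q))).
  symmetry; exact: (@Sw_DM k I A hA _ _ (bv j) (bv q) hK).
refine (@KL k I A hA _ (fun e1 (h : H) => tens (g (bv i) * (g (bv p) * g e1)) h) (m (bv j) (bv q)) hB).
Qed.

End Main.



Section Final.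
Variables (k : fieldType) (I : choiceType) (A : HopfData k I).
Hypothesis hA : is_hopf A.

Local Notation H := {malg k[I]}.
Local Notation m := (mulH A).
Local Notation S := (antip A).
Local Notation one := (h1 A).
Local Notation Sw := (Sw A).

Lemma tmap_tens {J L J' L' : choiceType}
  (f : {malg k[J]} -> {malg k[J']}) (g : {malg k[L]} -> {malg k[L']}) u v :
  lin f -> lin g -> tmap f g (tens u v) = tens (f u) (g v).
Proof.
move=> hf hg.
have h1 : bilin (fun u v => tmap f g (tens u v)).
  split=> z.
    exact: lin_comp (lin_ext _) (lin_tensl _).
  exact: lin_comp (lin_ext _) (lin_tensr _).
have h2 : bilin (fun u v => tens (f u) (g v)).
  split=> z.
    exact: lin_comp (lin_tensl _) hf.
  exact: lin_comp (lin_tensr _) hg.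
apply: (@lin_eq2 k J L _ _ _ u v h1 h2) => j l.
by rewrite tens_bv /tmap ext_bv.
Qed.

Definition wp (x : H) : TensH k I := Sw (fun a b => Xvar a * Xvar (S b)) x.
Definition wq (x y : H) : TensH k I :=
  Sw (fun a b => Sw (fun c d => Xvar a * (Xvar c * Xvar (S (m b d)))) y) x.

Section Gen.
Variable (M : monomType).
Variable (F : H -> {malg k[(M * I)%type]}).
Hypothesis hF : lin F.

Lemma Phi_wp x : Phi A F (wp x) = Sw (fun a b => mulMH A (F a) (F (S b))) x.
Proof.
rewrite /wp (@Sw_push k I A _ _ (Phi A F) _ x (lin_Phi A F)).
by apply: Sw_cong => i j; rewrite Phi2.
Qed.

Lemma Phi_wq x y : Phi A F (wq x y) =
  Sw (fun a b => Sw (fun c d => mulMH A (F a) (mulMH A (F c) (F (S (m b d))))) y) x.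
Proof.
rewrite /wq (@Sw_push k I A _ _ (Phi A F) _ x (lin_Phi A F)).
apply: Sw_cong => i j.
rewrite (@Sw_push k I A _ _ (Phi A F) _ y (lin_Phi A F)).
by apply: Sw_cong => p q; rewrite Phi3.
Qed.

End Gen.

Lemma mu_wp x : mu A (wp x) = tens (p_el A x) one.
Proof.
have hmu : lin (muX A) := (lin_Sw A (fun c d => tens (tvar c) d)).
have E := @Phi_wp (cmonom I) (muX A) hmu x.
change (Phi A (muX A) (wp x) = tens (p_el A x) one).
rewrite E.
exact: (@Gp_thm k I A hA _ (@tvar k I) (lin_ext _) x).
Qed.

Lemma deltaT_wp x : deltaT A (wp x) = tens (wp x) one.
Proof.
have hdx : lin (deltaX A) := (lin_Sw A (fun c d => tens (Xvar c) d)).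
change (Phi A (deltaX A) (wp x) = tens (wp x) one).
apply: etrans (@Phi_wp (fmonom I) (deltaX A) hdx x) _.
exact: (@Gp_thm k I A hA _ (@Xvar k I) (lin_ext _) x).
Qed.

Lemma mu_wq x y : mu A (wq x y) = tens (q_el A x y) one.
Proof.
have hmu : lin (muX A) := (lin_Sw A (fun c d => tens (tvar c) d)).
change (Phi A (muX A) (wq x y) =
  tens (Sw (fun a b => Sw (fun c d => tvar a * tvar c * tvar (S (m b d))) y) x) one).
apply: etrans (@Phi_wq (cmonom I) (muX A) hmu x y) _.
apply: etrans (@Gq_thm k I A hA _ (@tvar k I) (lin_ext _) x y) _.
apply: (congr1 (fun s => tens s one)); apply: Sw_cong => i j; apply: Sw_cong => p q.
by rewrite mulrA.
Qed.

Lemma deltaT_wq x y : deltaT A (wq x y) = tens (wq x y) one.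
Proof.
have hdx : lin (deltaX A) := (lin_Sw A (fun c d => tens (Xvar c) d)).
change (Phi A (deltaX A) (wq x y) = tens (wq x y) one).
apply: etrans (@Phi_wq (fmonom I) (deltaX A) hdx x y) _.
exact: (@Gq_thm k I A hA _ (@Xvar k I) (lin_ext _) x y).
Qed.

Lemma coinv_of (w : TensH k I) : deltaT A w = tens w one -> coinvT A w.
Proof.
move=> E; rewrite /coinvT E.
have hmu : lin (mu A) := lin_ext _.
exact: (@tmap_tens _ _ _ _ (mu A) id w one hmu (@lin_id k _)).
Qed.

End Final.

Theorem lemma5p1 (k : fieldType) (I : choiceType) (A : HopfData k I)
  (hA : is_hopf A) (x y : {malg k[I]}) :
  in_mubar_VH A (tens (p_el A x) (h1 A))
  /\ in_mubar_VH A (tens (q_el A x y) (h1 A)).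
Proof.
split.
  exists (wp A x); split; last exact: mu_wp.
  by apply: coinv_of; apply: deltaT_wp.
exists (wq A x y); split; last exact: mu_wq.
by apply: coinv_of; apply: deltaT_wq.
Qed.
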